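(* Let $G$ be a group given by a presentation $\langle X\mid R\rangle$ in which every $x\in X$ satisfies $x^2=e$ and every relation in $R$ has even length. If $I=X$ or $I=\{x\}$ for some $x\in X$, then for every $w\in G$ the set $wG_I\cap G^I$ contains exactly one element. Consequently, the factorisation of each element of $G$ with respect to $G_I$ is unique: if $w=ab=a'b'$ with $a,a'\in G^I$ and $b,b'\in G_I$, then $a=a'$ and $b=b'$.
   Context: Every $w\in G$ can be written as a product $x_1^{a_1}\cdots x_r^{a_r}$ with $x_j\in X$, $a_j=\pm1$; the length $l(w)$ is the smallest such $r$. The length of a relation $u=v$ ($u,v$ in the free group $F(X)$) is the length of the word $uv^{-1}$ in $F(X)$. For $I\subseteq X$, $G_I$ is the subgroup of $G$ generated by $I$, and $G^I=\{w\in G: l(wy)>l(w)\ \text{for all } y\in I\}$. *)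

(* Defs.v *)
From Stdlib Require Import List Bool Arith.
Import ListNotations.
Set Implicit Arguments.
Unset Strict Implicit.

Record group := Group {
  carrier :> Type;
  gmul : carrier -> carrier -> carrier;
  gone : carrier;
  ginv : carrier -> carrier;
  gmulA : forall a b c, gmul a (gmul b c) = gmul (gmul a b) c;
  gmul1l : forall a, gmul gone a = a;
  gmul1r : forall a, gmul a gone = a;
  gmulVl : forall a, gmul (ginv a) a = gone;
  gmulVr : forall a, gmul a (ginv a) = gone }.

(* Words over the alphabet X^{±1}: a letter (x, false) is x, (x, true) is x^{-1}. *)
Definition word (X : Type) := list (X * bool).

Definition winv {X : Type} (w : word X) : word X :=
  rev (map (fun a => (fst a, negb (snd a))) w).

(* Congruence on words generated by free cancellation and the relations R
   (R u v means the relation u = v).  With R empty it is equality in F(X);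
   in general it is equality in <X | R>. *)
Inductive wequiv {X : Type} (R : word X -> word X -> Prop) : word X -> word X -> Prop :=
| weq_refl w : wequiv R w w
| weq_sym u v : wequiv R u v -> wequiv R v u
| weq_trans u v w : wequiv R u v -> wequiv R v w -> wequiv R u w
| weq_cancel u v x b : wequiv R (u ++ (x, b) :: (x, negb b) :: v) (u ++ v)
| weq_rel u v r1 r2 : R r1 r2 -> wequiv R (u ++ r1 ++ v) (u ++ r2 ++ v).

Definition no_rel {X : Type} : word X -> word X -> Prop := fun _ _ => False.

Definition free_length_is {X : Type} (w : word X) (n : nat) : Prop :=
  (exists w', wequiv no_rel w' w /\ length w' = n) /\
  (forall w', wequiv no_rel w' w -> n <= length w').

Definition relation_length_is {X : Type} (u v : word X) (n : nat) : Prop :=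
  free_length_is (u ++ winv v) n.

Section Eval.
Variables (G : group) (X : Type) (iota : X -> G).

Definition letter (a : X * bool) : G :=
  if snd a then @ginv G (iota (fst a)) else iota (fst a).

Definition eval (w : word X) : G :=
  fold_right (fun a acc => @gmul G (letter a) acc) (gone G) w.

Definition presents (R : word X -> word X -> Prop) : Prop :=
  (forall g : G, exists w, eval w = g) /\
  (forall u v, eval u = eval v <-> wequiv R u v).

Definition length_is (g : G) (n : nat) : Prop :=
  (exists w, eval w = g /\ length w = n) /\
  (forall w, eval w = g -> n <= length w).

Definition in_GI (I : X -> Prop) (g : G) : Prop :=
  exists w, Forall (fun a => I (fst a)) w /\ eval w = g.

Definition in_GupI (I : X -> Prop) (g : G) : Prop :=
  forall y, I y -> forall n m, length_is g n -> length_is (@gmul G g (iota y)) m -> n < m.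

End Eval.

(* Main.v *)
Require Import Defs.
From Stdlib Require Import List Bool Arith Classical Lia.
Import ListNotations.

Lemma min_exists (P : nat -> Prop) : (exists n, P n) -> exists n, P n /\ forall m, P m -> n <= m.
Proof.
  intros [n Hn]. revert Hn. induction n as [n IH] using lt_wf_ind. intros Hn.
  destruct (classic (exists m, P m /\ m < n)) as [[m [Hm Hlt]]|Hno].
  - exact (IH m Hlt Hm).
  - exists n. split; auto. intros m Hm. destruct (le_lt_dec n m); auto.
    exfalso; apply Hno; eauto.
Qed.

Lemma wequiv_parity (X : Type) (R : word X -> word X -> Prop)
  (HR : forall r1 r2, R r1 r2 -> Nat.even (length r1) = Nat.even (length r2)) :
  forall u v, wequiv R u v -> Nat.even (length u) = Nat.even (length v).
Proof.
  intros u v H; induction H; auto.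
  - congruence.
  - rewrite !length_app. simpl. rewrite !Nat.even_add. reflexivity.
  - rewrite !length_app, !Nat.even_add. rewrite (HR _ _ H). reflexivity.
Qed.

Set Implicit Arguments.
Unset Strict Implicit.
Section S.
Variables (G : group) (X : Type) (iota : X -> G) (R : word X -> word X -> Prop).
Hypothesis hpres : presents iota R.
Hypothesis hinv : forall x : X, gmul (iota x) (iota x) = gone G.
Hypothesis heven : forall u v, R u v -> forall n, relation_length_is u v n -> Nat.even n = true.

Lemma eval_app u v : eval iota (u ++ v) = gmul (eval iota u) (eval iota v).
Proof.
  induction u as [|a u IH]; simpl.
  - rewrite gmul1l; auto.
  - rewrite IH, gmulA; auto.
Qed.

Lemma HRpar : forall r1 r2, R r1 r2 -> Nat.even (length r1) = Nat.even (length r2).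
Proof.
  intros r1 r2 H.
  destruct (min_exists (fun n => exists w', wequiv no_rel w' (r1 ++ winv r2) /\ length w' = n))
    as [n [[w' [Hw' Hl]] Hmin]].
  { eexists; exists (r1 ++ winv r2); split; [constructor|reflexivity]. }
  assert (He : Nat.even n = true).
  { apply (heven H). split; [exists w'; auto|]. intros w'' Hw''. apply Hmin. eauto. }
  assert (Hp := @wequiv_parity X no_rel ltac:(intros ? ? []) _ _ Hw').
  subst n. rewrite He in Hp. unfold winv in Hp.
  rewrite length_app, length_rev, length_map, Nat.even_add in Hp.
  destruct (Nat.even (length r1)), (Nat.even (length r2)); simpl in *; congruence.
Qed.

Lemma eval_parity u v : eval iota u = eval iota v -> Nat.even (length u) = Nat.even (length v).
Proof.
  intros H. apply (proj2 hpres) in H. exact (@wequiv_parity X R HRpar _ _ H).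
Qed.

Lemma len_exists g : exists n, length_is iota g n.
Proof.
  destruct (proj1 hpres g) as [w Hw].
  destruct (min_exists (fun n => exists w, eval iota w = g /\ length w = n)) as [n [Hn Hmin]].
  { eauto. }
  exists n. split; auto. intros w' Hw'. apply Hmin; eauto.
Qed.

Lemma len_uniq g n n' : length_is iota g n -> length_is iota g n' -> n = n'.
Proof.
  intros [[w [H1 H2]] H3] [[w' [H1' H2']] H3'].
  specialize (H3 w' H1'). specialize (H3' w H1). lia.
Qed.

Lemma len_step g x n m : length_is iota g n -> length_is iota (gmul g (iota x)) m -> m <= S n.
Proof.
  intros [[w [H1 H2]] _] [_ H].
  specialize (H (w ++ [(x,false)])). rewrite length_app in H. simpl in H.
  rewrite eval_app in H. simpl in H. unfold letter in H; simpl in H.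
  rewrite gmul1r in H. subst. specialize (H eq_refl). lia.
Qed.

Lemma len_par g x n m : length_is iota g n -> length_is iota (gmul g (iota x)) m -> n <> m.
Proof.
  intros [[w [H1 H2]] _] [[w' [H1' H2']] _] E.
  assert (He : eval iota (w ++ [(x,false)]) = eval iota w').
  { rewrite eval_app; simpl; unfold letter; simpl. rewrite gmul1r. congruence. }
  apply eval_parity in He. rewrite length_app in He. simpl in He.
  rewrite Nat.even_add in He. rewrite H2, H2', E in He.
  destruct (Nat.even m); simpl in He; discriminate.
Qed.

Lemma mul_ss g x : gmul (gmul g (iota x)) (iota x) = g.
Proof. rewrite <- gmulA, hinv, gmul1r. auto. Qed.

Lemma inv_s x : ginv (iota x) = iota x.
Proof.
  rewrite <- (gmul1r (ginv (iota x))), <- (hinv x), gmulA, gmulVl, gmul1l. auto.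
Qed.

Lemma mul_inv_r (a b : G) : gmul (gmul a b) (ginv b) = a.
Proof. rewrite <- gmulA, gmulVr, gmul1r. auto. Qed.

Variable x0 : X.
Variable I : X -> Prop.
Hypothesis HI : forall x, I x <-> x = x0.

Lemma up_intro g : (forall n m, length_is iota g n -> length_is iota (gmul g (iota x0)) m -> n < m) ->
  in_GupI iota I g.
Proof. intros H y Hy. apply HI in Hy. subst. auto. Qed.

Lemma not_both g : in_GupI iota I g -> in_GupI iota I (gmul g (iota x0)) -> False.
Proof.
  intros H1 H2.
  destruct (len_exists g) as [n Hn]. destruct (len_exists (gmul g (iota x0))) as [m Hm].
  assert (Hx : I x0) by (apply HI; auto).
  specialize (H1 x0 Hx n m Hn Hm).
  assert (Hn' : length_is iota (gmul (gmul g (iota x0)) (iota x0)) n) by (rewrite mul_ss; auto).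
  specialize (H2 x0 Hx m n Hm Hn'). lia.
Qed.

Lemma one_of g : in_GupI iota I g \/ in_GupI iota I (gmul g (iota x0)).
Proof.
  destruct (len_exists g) as [n Hn]. destruct (len_exists (gmul g (iota x0))) as [m Hm].
  assert (Hne := len_par Hn Hm).
  destruct (lt_dec n m).
  - left. apply up_intro. intros n' m' Hn' Hm'.
    rewrite <- (len_uniq Hn Hn'), <- (len_uniq Hm Hm'). auto.
  - right. apply up_intro. intros n' m' Hn' Hm'. rewrite mul_ss in Hm'.
    rewrite <- (len_uniq Hn Hm'), <- (len_uniq Hm Hn'). lia.
Qed.

Lemma GI_single b : in_GI iota I b -> b = gone G \/ b = iota x0.
Proof.
  intros [w [HF He]]. subst b. induction HF as [|a w Ha HF IH]; simpl; auto.
  apply HI in Ha. destruct a as [y bb]; simpl in Ha; subst y.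
  assert (Hl : letter iota (x0, bb) = iota x0) by (unfold letter; destruct bb; simpl; auto using inv_s).
  rewrite Hl. destruct IH as [E|E]; rewrite E.
  - right. apply gmul1r.
  - left. apply hinv.
Qed.

Lemma GI_e : in_GI iota I (gone G).
Proof. exists []. split; auto. Qed.
Lemma GI_s : in_GI iota I (iota x0).
Proof. exists [(x0,false)]. split.
  - constructor; auto. apply HI; auto.
  - simpl. unfold letter; simpl. apply gmul1r.
Qed.

End S.

Theorem lemma3p10 (G : group) (X : Type) (iota : X -> G)
    (R : word X -> word X -> Prop)
    (hpres : presents iota R)
    (hinv : forall x : X, gmul (iota x) (iota x) = gone G)
    (heven : forall u v, R u v -> forall n, relation_length_is u v n -> Nat.even n = true)
    (I : X -> Prop)
    (hI : (forall x, I x) \/ (exists x0, forall x, I x <-> x = x0)) :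
  (forall w : G, exists a : G,
      ((exists b, in_GI iota I b /\ a = gmul w b) /\ in_GupI iota I a) /\
      (forall a' : G, (exists b, in_GI iota I b /\ a' = gmul w b) /\ in_GupI iota I a' -> a' = a)) /\
  (forall w a a' b b' : G,
      in_GupI iota I a -> in_GupI iota I a' -> in_GI iota I b -> in_GI iota I b' ->
      w = gmul a b -> w = gmul a' b' -> a = a' /\ b = b').
Proof.
  destruct hI as [HI | [x0 HI]].
  - assert (Hup_e : forall a, in_GupI iota I a -> a = gone G).
    { intros a Ha. destruct (len_exists hpres a) as [n Hn].
      destruct Hn as [[w [Hw Hl]] Hmin].
      destruct w as [|c w'].
      { subst; reflexivity. }
      destruct (exists_last (l:=c::w') ltac:(discriminate)) as [w1 [[x b] Hw1]].
      rewrite Hw1 in Hw, Hl. clear Hw1.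
      assert (E : gmul a (iota x) = eval iota w1).
      { rewrite <- Hw, eval_app. simpl. unfold letter; simpl. rewrite gmul1r, <- gmulA.
        destruct b; rewrite ?gmulVl, ?hinv; apply gmul1r. }
      destruct (len_exists hpres (gmul a (iota x))) as [m Hm].
      assert (Hlt := Ha x (HI x) n m (conj (ex_intro _ _ (conj Hw Hl)) Hmin) Hm).
      destruct Hm as [_ Hm]. specialize (Hm w1 (eq_sym E)).
      rewrite length_app in Hl. simpl in Hl. lia. }
    assert (He : in_GupI iota I (gone G)).
    { intros y _ n m Hn Hm.
      assert (H0 : length_is iota (gone G) 0).
      { split. exists []; auto. intros; lia. }
      rewrite <- (len_uniq H0 Hn).
      destruct m; [|lia]. exfalso.
      destruct Hm as [[w [Hw Hl]] _]. destruct w; [|discriminate].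
      assert (Ev : eval iota [] = eval iota [(y,false)]).
      { simpl. unfold letter; simpl. rewrite gmul1r. simpl in Hw. rewrite gmul1l in Hw. exact Hw. }
      apply (eval_parity hpres heven) in Ev. discriminate. }
    split.
    + intros w. exists (gone G). split.
      * split; auto. exists (ginv w). split.
        -- destruct (proj1 hpres (ginv w)) as [u Hu]. exists u. split; auto.
           apply Forall_forall. auto.
        -- rewrite gmulVr. reflexivity.
      * intros a' [_ Ha']. auto.
    + intros w a a' b b' Ha Ha' _ _ E1 E2.
      rewrite (Hup_e a Ha), gmul1l in E1. rewrite (Hup_e a' Ha'), gmul1l in E2.
      split; [rewrite (Hup_e a Ha), (Hup_e a' Ha')|]; congruence.
  - split.
    + intros w. destruct (one_of hpres hinv heven HI w) as [H|H].
      * exists w. split.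
        -- split; auto. exists (gone G). split; [apply GI_e|]. rewrite gmul1r; auto.
        -- intros a' [[b [Hb E]] Ha']. destruct (GI_single hinv HI Hb); subst; auto.
           ++ apply gmul1r.
           ++ exfalso. exact (not_both hpres hinv HI H Ha').
      * exists (gmul w (iota x0)). split.
        -- split; auto. exists (iota x0). split; auto. apply GI_s; auto.
        -- intros a' [[b [Hb E]] Ha']. destruct (GI_single hinv HI Hb); subst; auto.
           exfalso. rewrite gmul1r in Ha'. exact (not_both hpres hinv HI Ha' H).
    + intros w a a' b b' Ha Ha' Hb Hb' E1 E2.
      destruct (GI_single hinv HI Hb), (GI_single hinv HI Hb'); subst b b' w.
      * rewrite !gmul1r in E2. auto.
      * exfalso. rewrite gmul1r in E2. rewrite E2 in Ha. exact (not_both hpres hinv HI Ha' Ha).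
      * exfalso. rewrite gmul1r in E2. rewrite <- E2 in Ha'. exact (not_both hpres hinv HI Ha Ha').
      * split; auto. rewrite <- (mul_ss hinv a x0), E2. apply mul_ss; auto.
Qed.
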